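(* Under the hypotheses and notation of the previous statement (real-valued $w$, $\lim_{x\to\pm\infty}w=\mp k_0$, $k_0>0$, transfer matrix $M(k)$ defined through the Jost solutions of $-\psi''+(-w^2-iw'+k_0^2)\psi=k^2\psi$), assume moreover that $M_{11}$ and $M_{22}$ are differentiable at $k=k_0$. Then $$M_{11}(k_0)=2k_0\,\overline{M_{22}'(k_0)}.$$ Consequently the spectral singularity at $k_0$ (where $M_{22}(k_0)=0$ always) is self-dual, i.e. $M_{11}(k_0)=0$, if and only if $M_{22}'(k_0)=0$, i.e. iff $k_0$ is a zero of $M_{22}$ of order at least two.
   Context: The transfer matrix $M(k)$ relates left Jost solutions ($\phi_1^L\sim e^{ikx}$, $\phi_2^L\sim e^{-ikx}$ at $-\infty$) and right Jost solutions ($\phi_1^R\sim e^{ikx}$, $\phi_2^R\sim e^{-ikx}$ at $+\infty$) via $\phi_1^L=M_{11}\phi_1^R+M_{21}\phi_2^R$, $\phi_2^L=M_{12}\phi_1^R+M_{22}\phi_2^R$. Overline denotes complex conjugation, prime denotes derivative in $k$. *)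

(* Defs.v *)
From Stdlib Require Import Reals.
Open Scope R_scope.

Definition Cplx : Type := (R * R)%type.
Definition Cre (z : Cplx) : R := fst z.
Definition Cim (z : Cplx) : R := snd z.
Definition C0 : Cplx := (0, 0).
Definition RtoC (r : R) : Cplx := (r, 0).
Definition Cadd (z u : Cplx) : Cplx := (Cre z + Cre u, Cim z + Cim u).
Definition Copp (z : Cplx) : Cplx := (- Cre z, - Cim z).
Definition Cmul (z u : Cplx) : Cplx :=
  (Cre z * Cre u - Cim z * Cim u, Cre z * Cim u + Cim z * Cre u).
Definition Cconj (z : Cplx) : Cplx := (Cre z, - Cim z).
Definition Cnorm (z : Cplx) : R := sqrt (Cre z ^ 2 + Cim z ^ 2).
Definition Cexpi (t : R) : Cplx := (cos t, sin t).

Definition Cderiv_lim (f : R -> Cplx) (x : R) (l : Cplx) : Prop :=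
  derivable_pt_lim (fun t => Cre (f t)) x (Cre l) /\
  derivable_pt_lim (fun t => Cim (f t)) x (Cim l).

Definition lim_minus_infty (f : R -> R) (l : R) : Prop :=
  forall eps, 0 < eps -> exists A, forall x, x < A -> Rabs (f x - l) < eps.
Definition lim_plus_infty (f : R -> R) (l : R) : Prop :=
  forall eps, 0 < eps -> exists A, forall x, A < x -> Rabs (f x - l) < eps.
Definition Clim_minus_infty (f : R -> Cplx) (l : Cplx) : Prop :=
  forall eps, 0 < eps -> exists A, forall x, x < A -> Cnorm (Cadd (f x) (Copp l)) < eps.
Definition Clim_plus_infty (f : R -> Cplx) (l : Cplx) : Prop :=
  forall eps, 0 < eps -> exists A, forall x, A < x -> Cnorm (Cadd (f x) (Copp l)) < eps.

(** * The potential  V = -w^2 - i w' + k0^2  (dw is the derivative w') *)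
Definition potV (w dw : R -> R) (k0 : R) (x : R) : Cplx :=
  (- (w x) ^ 2 + k0 ^ 2, - dw x).

Definition solves_schrodinger (V : R -> Cplx) (k : R) (psi : R -> Cplx) : Prop :=
  exists dpsi ddpsi : R -> Cplx,
    forall x, Cderiv_lim psi x (dpsi x) /\ Cderiv_lim dpsi x (ddpsi x) /\
      Cadd (Copp (ddpsi x)) (Cmul (V x) (psi x)) = Cmul (RtoC (k ^ 2)) (psi x).

Definition jost_left1 V k (phi : R -> Cplx) : Prop :=
  solves_schrodinger V k phi /\
  Clim_minus_infty (fun x => Cadd (phi x) (Copp (Cexpi (k * x)))) C0.
Definition jost_left2 V k (phi : R -> Cplx) : Prop :=
  solves_schrodinger V k phi /\
  Clim_minus_infty (fun x => Cadd (phi x) (Copp (Cexpi (- k * x)))) C0.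
Definition jost_right1 V k (phi : R -> Cplx) : Prop :=
  solves_schrodinger V k phi /\
  Clim_plus_infty (fun x => Cadd (phi x) (Copp (Cexpi (k * x)))) C0.
Definition jost_right2 V k (phi : R -> Cplx) : Prop :=
  solves_schrodinger V k phi /\
  Clim_plus_infty (fun x => Cadd (phi x) (Copp (Cexpi (- k * x)))) C0.

(** Short-range condition  \int_R (1+|x|) |V(x)| dx < infinity, expressed as:
    the (continuous, nonnegative) integrand has a bounded primitive. *)
Definition short_range (V : R -> Cplx) : Prop :=
  exists G : R -> R,
    (forall x, derivable_pt_lim G x ((1 + Rabs x) * Cnorm (V x))) /\
    exists B, forall x, Rabs (G x) <= B.

Definition transfer_matrix_at (V : R -> Cplx) (k : R)
  (phi1L phi2L phi1R phi2R : R -> R -> Cplx)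
  (M11 M12 M21 M22 : R -> Cplx) : Prop :=
  jost_left1 V k (phi1L k) /\ jost_left2 V k (phi2L k) /\
  jost_right1 V k (phi1R k) /\ jost_right2 V k (phi2R k) /\
  (forall x, phi1L k x = Cadd (Cmul (M11 k) (phi1R k x)) (Cmul (M21 k) (phi2R k x))) /\
  (forall x, phi2L k x = Cadd (Cmul (M12 k) (phi1R k x)) (Cmul (M22 k) (phi2R k x))).

(* Main.v *)
Require Import Defs.
From Stdlib Require Import Reals.
From Stdlib Require Import Lra Psatz Nsatz FunctionalExtensionality Classical.
From Coquelicot Require Complex.
Open Scope R_scope.


Ltac cunf := unfold Cadd, Cmul, Copp, Cconj, RtoC, Cre, Cim, C0, Cexpi in *; simpl in *.
Ltac ceq := cunf; apply injective_projections; simpl; ring.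

Lemma Cnorm_tri z u : Cnorm (Cadd z u) <= Cnorm z + Cnorm u.
Proof. exact (Complex.Cmod_triangle z u). Qed.
Lemma Cnorm_mul z u : Cnorm (Cmul z u) = Cnorm z * Cnorm u.
Proof. exact (Complex.Cmod_mult z u). Qed.
Lemma Cnorm_ge0 z : 0 <= Cnorm z.
Proof. apply sqrt_pos. Qed.
Lemma Cnorm_conj z : Cnorm (Cconj z) = Cnorm z.
Proof. unfold Cnorm, Cconj, Cre, Cim; simpl. f_equal. ring. Qed.
Lemma Cnorm_opp z : Cnorm (Copp z) = Cnorm z.
Proof. unfold Cnorm, Copp, Cre, Cim; simpl. f_equal. ring. Qed.
Lemma Cnorm_expi t : Cnorm (Cexpi t) = 1.
Proof. unfold Cnorm, Cexpi, Cre, Cim; simpl.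
  replace (cos t * (cos t * 1) + sin t * (sin t * 1)) with 1. apply sqrt_1.
  pose proof (sin2_cos2 t). unfold Rsqr in *. nra. Qed.
Lemma Cnorm_re z : Rabs (Cre z) <= Cnorm z.
Proof. exact (Rle_trans _ _ _ (Rmax_l (Rabs (fst z)) (Rabs (snd z))) (Complex.Rmax_Cmod z)). Qed.
Lemma Cnorm_im z : Rabs (Cim z) <= Cnorm z.
Proof. exact (Rle_trans _ _ _ (Rmax_r (Rabs (fst z)) (Rabs (snd z))) (Complex.Rmax_Cmod z)). Qed.
Lemma Cnorm_le z : Cnorm z <= Rabs (Cre z) + Rabs (Cim z).
Proof. destruct z as [a b]. unfold Cnorm, Cre, Cim; simpl.
  apply Rsqr_incr_0_var. 2: pose proof (Rabs_pos a); pose proof (Rabs_pos b); lra.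
  rewrite Rsqr_sqrt by nra. unfold Rsqr.
  pose proof (Rabs_pos a); pose proof (Rabs_pos b).
  replace (a*(a*1)+b*(b*1)) with (Rabs a * Rabs a + Rabs b * Rabs b).
  nra. rewrite <- !Rabs_mult. rewrite !Rabs_right by nra. ring. Qed.
Lemma Cnorm_real r : Cnorm (RtoC r) = Rabs r.
Proof. unfold Cnorm, RtoC, Cre, Cim; simpl.
  replace (r*(r*1)+0*(0*1)) with (r²) by (unfold Rsqr; ring). apply sqrt_Rsqr_abs. Qed.
Lemma Cnorm_eq0 z : Cnorm z = 0 -> z = C0.
Proof. intro H. pose proof (Cnorm_re z). pose proof (Cnorm_im z). rewrite H in *.
  destruct z as [a b]. unfold Cre, Cim, C0 in *; simpl in *.
  pose proof (Rabs_pos a); pose proof (Rabs_pos b).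
  assert (a = 0) by (destruct (Req_dec a 0); auto; exfalso; apply (Rabs_no_R0 a); auto; lra).
  assert (b = 0) by (destruct (Req_dec b 0); auto; exfalso; apply (Rabs_no_R0 b); auto; lra). subst; auto. Qed.
Lemma Cnorm_sub_le z u : Cnorm z <= Cnorm (Cadd z (Copp u)) + Cnorm u.
Proof. replace z with (Cadd (Cadd z (Copp u)) u) at 1 by ceq. apply Cnorm_tri. Qed.

Lemma Cexpi_add a b : Cexpi (a + b) = Cmul (Cexpi a) (Cexpi b).
Proof. unfold Cexpi, Cmul, Cre, Cim; simpl. rewrite cos_plus, sin_plus. f_equal; ring. Qed.
Lemma Cexpi_neg a : Cexpi (- a) = Cconj (Cexpi a).
Proof. unfold Cexpi, Cconj, Cre, Cim; simpl. rewrite cos_neg, sin_neg. auto. Qed.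
Lemma Cexpi_conj_mul a : Cmul (Cexpi a) (Cconj (Cexpi a)) = (1, 0).
Proof. unfold Cexpi, Cconj, Cmul, Cre, Cim; simpl. pose proof (sin2_cos2 a). unfold Rsqr in *.
  f_equal; lra. Qed.
Lemma Cexpi_pi a u : (u = 1 \/ u = -1) -> Cexpi (a + PI * u) = Copp (Cexpi a).
Proof. intros [->| ->]; unfold Cexpi, Copp, Cre, Cim; simpl.
  - rewrite Rmult_1_r, neg_cos, neg_sin. auto.
  - replace (a + PI * -1) with ((a - PI - PI) + PI) by ring.
    rewrite neg_cos, neg_sin. replace (a - PI - PI) with (a + - (2*PI)) by ring.
    rewrite cos_plus, sin_plus, cos_neg, sin_neg, cos_2PI, sin_2PI. f_equal; ring. Qed.


Definition ev (d : R) (P : R -> Prop) := exists A, forall x, A < d * x -> P x.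
Lemma ev_and d P Q : ev d P -> ev d Q -> ev d (fun x => P x /\ Q x).
Proof. intros [A HA] [B HB]. exists (Rmax A B). intros x Hx. split.
  apply HA. pose proof (Rmax_l A B); lra. apply HB. pose proof (Rmax_r A B); lra. Qed.
Lemma ev_mono d (P Q : R -> Prop) : ev d P -> (forall x, P x -> Q x) -> ev d Q.
Proof. intros [A HA] H. exists A. auto. Qed.

Definition tz d (f : R -> Cplx) := forall eps, 0 < eps -> ev d (fun x => Cnorm (f x) < eps).
Definition bnd d (f : R -> Cplx) := exists B, ev d (fun x => Cnorm (f x) <= B).

Lemma tz_intro d f C : 0 < C -> (forall eps, 0 < eps -> ev d (fun x => Cnorm (f x) <= C * eps)) -> tz d f.
Proof. intros HC H eps He. destruct (H (eps / (2*C))) as [A HA].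
  apply Rdiv_lt_0_compat; lra. exists A. intros x Hx. specialize (HA x Hx).
  replace (C * (eps / (2*C))) with (eps/2) in HA by (field; lra). lra. Qed.

Lemma tz_ext d f g : ev d (fun x => f x = g x) -> tz d f -> tz d g.
Proof. intros He H eps Heps. eapply ev_mono. apply ev_and. apply He. apply (H eps Heps).
  simpl. intros x [E1 E2]. rewrite <- E1. auto. Qed.
Lemma tz_extg d f g : (forall x, f x = g x) -> tz d f -> tz d g.
Proof. intros He. apply tz_ext. exists 0. auto. Qed.

Lemma tz_add d f g : tz d f -> tz d g -> tz d (fun x => Cadd (f x) (g x)).
Proof. intros Hf Hg. apply (tz_intro _ _ 2). lra. intros eps He.
  eapply ev_mono. apply ev_and. apply (Hf eps He). apply (Hg eps He). simpl.
  intros x [H1 H2]. pose proof (Cnorm_tri (f x) (g x)). lra. Qed.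
Lemma tz_opp d f : tz d f -> tz d (fun x => Copp (f x)).
Proof. intros Hf eps He. eapply ev_mono. apply (Hf eps He). simpl. intros x H. rewrite Cnorm_opp. auto. Qed.
Lemma tz_conj d f : tz d f -> tz d (fun x => Cconj (f x)).
Proof. intros Hf eps He. eapply ev_mono. apply (Hf eps He). simpl. intros x H. rewrite Cnorm_conj. auto. Qed.
Lemma tz_mulb d g f : bnd d g -> tz d f -> tz d (fun x => Cmul (g x) (f x)).
Proof. intros [B HB] Hf. apply (tz_intro _ _ (Rabs B + 1)). pose proof (Rabs_pos B); lra.
  intros eps He. eapply ev_mono. apply ev_and. apply HB. apply (Hf eps He). simpl.
  intros x [H1 H2]. rewrite Cnorm_mul. pose proof (Cnorm_ge0 (g x)). pose proof (Cnorm_ge0 (f x)).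
  pose proof (Rle_abs B). nra. Qed.
Lemma tz_mulc d c f : tz d f -> tz d (fun x => Cmul c (f x)).
Proof. apply (tz_mulb d (fun _ => c)). exists (Cnorm c). exists 0. intros; lra. Qed.
Lemma tz_zero d : tz d (fun _ => C0).
Proof. intros eps He. exists 0. intros. unfold Cnorm, C0, Cre, Cim; simpl.
  replace (0*(0*1)+0*(0*1)) with 0 by ring. rewrite sqrt_0. auto. Qed.

Lemma bnd_const d c : bnd d (fun _ => c).
Proof. exists (Cnorm c). exists 0. intros; lra. Qed.
Lemma bnd_expi d (a : R -> R) : bnd d (fun x => Cexpi (a x)).
Proof. exists 1. exists 0. intros. rewrite Cnorm_expi. lra. Qed.
Lemma bnd_add d f g : bnd d f -> bnd d g -> bnd d (fun x => Cadd (f x) (g x)).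
Proof. intros [A HA] [B HB]. exists (A+B). eapply ev_mono. apply ev_and. apply HA. apply HB.
  simpl. intros x [H1 H2]. pose proof (Cnorm_tri (f x) (g x)). lra. Qed.
Lemma bnd_mul d f g : bnd d f -> bnd d g -> bnd d (fun x => Cmul (f x) (g x)).
Proof. intros [A HA] [B HB]. exists (A*B). eapply ev_mono. apply ev_and. apply HA. apply HB.
  simpl. intros x [H1 H2]. rewrite Cnorm_mul. pose proof (Cnorm_ge0 (f x)). pose proof (Cnorm_ge0 (g x)).
  apply Rmult_le_compat; auto. Qed.
Lemma bnd_conj d f : bnd d f -> bnd d (fun x => Cconj (f x)).
Proof. intros [A HA]. exists A. eapply ev_mono. apply HA. simpl. intros x H. rewrite Cnorm_conj; auto. Qed.
Lemma bnd_tz d f : tz d f -> bnd d f.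
Proof. intros H. exists 1. eapply ev_mono. apply (H 1 Rlt_0_1). simpl; intros; lra. Qed.
Lemma bnd_near d f g : tz d (fun x => Cadd (f x) (Copp (g x))) -> bnd d g -> bnd d f.
Proof. intros H Hg. destruct (bnd_add d _ _ (bnd_tz _ _ H) Hg) as [B HB]. exists B.
  eapply ev_mono. apply HB. simpl. intros x Hx. replace (f x) with (Cadd (Cadd (f x) (Copp (g x))) (g x)) by ceq. auto. Qed.

Lemma ev_point d P : d * d = 1 -> ev d P -> exists x, P x.
Proof. intros Hd [A HA]. exists (d * (A+1)). apply HA. replace (d*(d*(A+1))) with ((d*d)*(A+1)) by ring.
  rewrite Hd. lra. Qed.
Lemma tz_const d c : d * d = 1 -> tz d (fun _ => c) -> c = C0.
Proof. intros Hd H. apply Cnorm_eq0. pose proof (Cnorm_ge0 c).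
  destruct (Rle_lt_or_eq_dec _ _ H0) as [Hlt|]; auto.
  destruct (ev_point d _ Hd (H _ Hlt)). lra. Qed.

Definition tr d (w : R -> R) (om : R) := forall eps, 0 < eps -> ev d (fun x => Rabs (w x - om) < eps).
Lemma tz_real d w om : tr d w om -> tz d (fun x => RtoC (w x - om)).
Proof. intros H eps He. eapply ev_mono. apply (H eps He). simpl. intros. rewrite Cnorm_real. auto. Qed.
Lemma bnd_real d w om : tr d w om -> bnd d (fun x => RtoC (w x)).
Proof. intros H. apply (bnd_near d _ (fun _ => RtoC om)). 2: apply bnd_const.
  eapply tz_extg. 2: apply (tz_real _ _ _ H). intros; ceq. Qed.

Lemma tz_of_plus f : Clim_plus_infty f C0 -> tz 1 f.
Proof. intros H eps He. destruct (H eps He) as [A HA]. exists A. intros x Hx.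
  specialize (HA x ltac:(lra)). replace (f x) with (Cadd (f x) (Copp C0)) by ceq. auto. Qed.
Lemma tz_of_minus f : Clim_minus_infty f C0 -> tz (-1) f.
Proof. intros H eps He. destruct (H eps He) as [A HA]. exists (-A). intros x Hx.
  specialize (HA x ltac:(lra)). replace (f x) with (Cadd (f x) (Copp C0)) by ceq. auto. Qed.
Lemma tr_of_plus w l : lim_plus_infty w l -> tr 1 w l.
Proof. intros H eps He. destruct (H eps He) as [A HA]. exists A. intros x Hx. apply HA; lra. Qed.
Lemma tr_of_minus w l : lim_minus_infty w l -> tr (-1) w l.
Proof. intros H eps He. destruct (H eps He) as [A HA]. exists (-A). intros x Hx. apply HA; lra. Qed.


Lemma dpl_plus f g x a b : derivable_pt_lim f x a -> derivable_pt_lim g x b ->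
  derivable_pt_lim (fun t => f t + g t) x (a + b).
Proof. intros. exact (derivable_pt_lim_plus f g x a b H H0). Qed.
Lemma dpl_minus f g x a b : derivable_pt_lim f x a -> derivable_pt_lim g x b ->
  derivable_pt_lim (fun t => f t - g t) x (a - b).
Proof. intros. exact (derivable_pt_lim_minus f g x a b H H0). Qed.
Lemma dpl_mult f g x a b : derivable_pt_lim f x a -> derivable_pt_lim g x b ->
  derivable_pt_lim (fun t => f t * g t) x (a * g x + f x * b).
Proof. intros. exact (derivable_pt_lim_mult f g x a b H H0). Qed.
Lemma dpl_opp f x a : derivable_pt_lim f x a -> derivable_pt_lim (fun t => - f t) x (- a).
Proof. intros. exact (derivable_pt_lim_opp f x a H). Qed.
Lemma dpl_const c x : derivable_pt_lim (fun _ => c) x 0.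
Proof. exact (derivable_pt_lim_const c x). Qed.
Lemma dpl_eq f x a b : derivable_pt_lim f x a -> a = b -> derivable_pt_lim f x b.
Proof. intros H ->; auto. Qed.

Lemma Cd_eq f x a b : Cderiv_lim f x a -> a = b -> Cderiv_lim f x b.
Proof. intros H ->; auto. Qed.
Lemma Cd_unique f x a b : Cderiv_lim f x a -> Cderiv_lim f x b -> a = b.
Proof. intros [H1 H2] [H3 H4]. apply injective_projections.
  exact (uniqueness_limite _ _ _ _ H1 H3). exact (uniqueness_limite _ _ _ _ H2 H4). Qed.
Lemma Cd_ext f g x a : (forall t, f t = g t) -> Cderiv_lim f x a -> Cderiv_lim g x a.
Proof. intros H. replace g with f. auto. apply functional_extensionality; auto. Qed.
Lemma Cd_add f g x a b : Cderiv_lim f x a -> Cderiv_lim g x b ->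
  Cderiv_lim (fun t => Cadd (f t) (g t)) x (Cadd a b).
Proof. intros [H1 H2] [H3 H4]. split.
  exact (dpl_plus _ _ x _ _ H1 H3). exact (dpl_plus _ _ x _ _ H2 H4). Qed.
Lemma Cd_opp f x a : Cderiv_lim f x a -> Cderiv_lim (fun t => Copp (f t)) x (Copp a).
Proof. intros [H1 H2]. split. exact (dpl_opp _ x _ H1). exact (dpl_opp _ x _ H2). Qed.
Lemma Cd_conj f x a : Cderiv_lim f x a -> Cderiv_lim (fun t => Cconj (f t)) x (Cconj a).
Proof. intros [H1 H2]. split. exact H1. exact (dpl_opp _ x _ H2). Qed.
Lemma Cd_const c x : Cderiv_lim (fun _ => c) x C0.
Proof. split; apply dpl_const. Qed.
Lemma Cd_mul f g x a b : Cderiv_lim f x a -> Cderiv_lim g x b ->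
  Cderiv_lim (fun t => Cmul (f t) (g t)) x (Cadd (Cmul a (g x)) (Cmul (f x) b)).
Proof. intros [H1 H2] [H3 H4]. split.
  - eapply dpl_eq. exact (dpl_minus _ _ x _ _ (dpl_mult _ _ x _ _ H1 H3) (dpl_mult _ _ x _ _ H2 H4)).
    cunf. ring.
  - eapply dpl_eq. exact (dpl_plus _ _ x _ _ (dpl_mult _ _ x _ _ H1 H4) (dpl_mult _ _ x _ _ H2 H3)).
    cunf. ring. Qed.
Lemma Cd_imag w x a : derivable_pt_lim w x a -> Cderiv_lim (fun t => (0, w t)) x (0, a).
Proof. intros H. split. exact (dpl_const 0 x). exact H. Qed.
Lemma Cd_real w x a : derivable_pt_lim w x a -> Cderiv_lim (fun t => RtoC (w t)) x (RtoC a).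
Proof. intros H. split. exact H. exact (dpl_const 0 x). Qed.
Lemma Cd_expi c x : Cderiv_lim (fun t => Cexpi (c * t)) x (Cmul (0, c) (Cexpi (c * x))).
Proof. split.
  - eapply dpl_eq. apply (derivable_pt_lim_comp (fun t => c * t) cos).
    eapply dpl_eq. apply (dpl_mult (fun _ => c) (fun t => t)). apply dpl_const. apply derivable_pt_lim_id.
    reflexivity. apply derivable_pt_lim_cos. cunf. ring.
  - eapply dpl_eq. apply (derivable_pt_lim_comp (fun t => c * t) sin).
    eapply dpl_eq. apply (dpl_mult (fun _ => c) (fun t => t)). apply dpl_const. apply derivable_pt_lim_id.
    reflexivity. apply derivable_pt_lim_sin. cunf. ring. Qed.

Lemma const_of_d0 (h : R -> R) : (forall x, derivable_pt_lim h x 0) -> forall x y, h x = h y.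
Proof. intros H. assert (forall x y, x < y -> h x = h y).
  { intros x y Hxy. destruct (MVT_cor2 h (fun _ => 0) x y Hxy) as [c [Hc _]]. intros; auto. lra. }
  intros x y. destruct (Rtotal_order x y) as [|[|]]; subst; auto. symmetry; auto. Qed.
Lemma Cconst_of_d0 (h : R -> Cplx) : (forall x, Cderiv_lim h x C0) -> forall x y, h x = h y.
Proof. intros H x y. apply injective_projections.
  apply (const_of_d0 (fun t => Cre (h t))). intros; apply H.
  apply (const_of_d0 (fun t => Cim (h t))). intros; apply H. Qed.

Lemma incr_bound (h r G g : R -> R) C a b :
  (forall x, derivable_pt_lim h x (r x)) -> (forall x, derivable_pt_lim G x (g x)) -> a <= b ->
  (forall c, a <= c <= b -> Rabs (r c) <= C * g c) -> Rabs (h b - h a) <= C * (G b - G a).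
Proof. intros Hh HG Hab Hb. destruct (Rle_lt_or_eq_dec _ _ Hab) as [Hlt|<-].
  2: { replace (h a - h a) with 0 by ring. rewrite Rabs_R0. lra. }
  destruct (MVT_cor2 (fun t => C * G t - h t) (fun t => C * g t - r t) a b Hlt) as [c1 [E1 H1]].
  { intros c _. apply dpl_minus. eapply dpl_eq. apply (dpl_mult (fun _ => C) G). apply dpl_const. apply HG. ring. apply Hh. }
  destruct (MVT_cor2 (fun t => C * G t + h t) (fun t => C * g t + r t) a b Hlt) as [c2 [E2 H2]].
  { intros c _. apply dpl_plus. eapply dpl_eq. apply (dpl_mult (fun _ => C) G). apply dpl_const. apply HG. ring. apply Hh. }
  assert (A1 := Hb c1 ltac:(lra)). assert (A2 := Hb c2 ltac:(lra)).
  pose proof (Rle_abs (r c1)). pose proof (Rle_abs (- r c1)). rewrite Rabs_Ropp in *.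
  pose proof (Rle_abs (r c2)). pose proof (Rle_abs (- r c2)). rewrite Rabs_Ropp in *.
  apply Rabs_le. split; nra. Qed.


Definition sol V k (f df : R -> Cplx) := forall x,
  Cderiv_lim f x (df x) /\ Cderiv_lim df x (Cmul (Cadd (V x) (RtoC (- k^2))) (f x)).

Lemma d_cases d : d * d = 1 -> d = 1 \/ d = -1.
Proof. intros. assert ((d-1)*(d+1) = 0) by nra. apply Rmult_integral in H0. lra. Qed.

Lemma ev_between d A x y c : d * d = 1 -> A < d * x -> A < d * y -> x <= c <= y -> A < d * c.
Proof. intros Hd H1 H2 H3. destruct (d_cases d Hd); subst; nra. Qed.

Definition caur d (G : R -> R) := forall eps, 0 < eps -> exists A, forall x y,
  A < d * x -> A < d * y -> Rabs (G x - G y) < eps.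
Definition cau d (F : R -> Cplx) := forall eps, 0 < eps -> exists A, forall x y,
  A < d * x -> A < d * y -> Cnorm (Cadd (F x) (Copp (F y))) < eps.

Lemma G_cau d G g : d * d = 1 -> (forall x, derivable_pt_lim G x (g x)) -> (forall x, 0 <= g x) ->
  (exists B, forall x, Rabs (G x) <= B) -> caur d G.
Proof. intros Hd HG Hg [B HB].
  assert (Hmon : forall a b, a <= b -> G a <= G b).
  { intros a b Hab. destruct (Rle_lt_or_eq_dec _ _ Hab) as [Hlt|<-]; [|lra].
    destruct (MVT_cor2 G g a b Hlt) as [c [E _]]; auto. specialize (Hg c). nra. }
  intros eps He. destruct (d_cases d Hd); subst.
  - set (S := fun y => exists x, y = G x).
    destruct (completeness S) as [L [HL1 HL2]].
    { exists B. intros y [x ->]. pose proof (Rle_abs (G x)). specialize (HB x). lra. }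
    { exists (G 0). exists 0. auto. }
    assert (exists x0, L - eps < G x0) as [x0 Hx0].
    { apply NNPP. intro Hn. assert (is_upper_bound S (L - eps)).
      { intros y [x ->]. apply Rnot_lt_le. intro. apply Hn. exists x. auto. }
      specialize (HL2 _ H). lra. }
    exists x0. intros x y Hx Hy.
    assert (G x <= L) by (apply HL1; exists x; auto).
    assert (G y <= L) by (apply HL1; exists y; auto).
    pose proof (Hmon x0 x ltac:(lra)). pose proof (Hmon x0 y ltac:(lra)).
    apply Rabs_def1; lra.
  - set (S := fun y => exists x, y = - G x).
    destruct (completeness S) as [L [HL1 HL2]].
    { exists B. intros y [x ->]. pose proof (Rle_abs (- G x)). rewrite Rabs_Ropp in H. specialize (HB x). lra. }
    { exists (- G 0). exists 0. auto. }
    assert (exists x0, L - eps < - G x0) as [x0 Hx0].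
    { apply NNPP. intro Hn. assert (is_upper_bound S (L - eps)).
      { intros y [x ->]. apply Rnot_lt_le. intro. apply Hn. exists x. auto. }
      specialize (HL2 _ H). lra. }
    exists (- x0). intros x y Hx Hy.
    assert (- G x <= L) by (apply HL1; exists x; auto).
    assert (- G y <= L) by (apply HL1; exists y; auto).
    pose proof (Hmon x x0 ltac:(lra)). pose proof (Hmon y x0 ltac:(lra)).
    apply Rabs_def1; lra.
Qed.

Definition Zf (ka : R) (f df : R -> Cplx) (x : R) : Cplx :=
  Cmul (Cexpi (ka * x)) (Cadd (df x) (Copp (Cmul (0, ka) (f x)))).

Lemma Zf_deriv V k ka f df : sol V k f df -> ka * ka = k ^ 2 -> forall x,
  Cderiv_lim (Zf ka f df) x (Cmul (Cexpi (ka * x)) (Cmul (V x) (f x))).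
Proof. intros Hs Hk x. unfold sol in Hs. rewrite <- Hk in Hs. destruct (Hs x) as [H1 H2].
  eapply Cd_eq. apply Cd_mul. apply Cd_expi. apply Cd_add. apply H2. apply Cd_opp.
  apply Cd_mul. apply Cd_const. apply H1. ceq. Qed.

Lemma Zf_cau V k ka f df d G : sol V k f df -> ka * ka = k ^ 2 -> d * d = 1 ->
  (forall x, derivable_pt_lim G x ((1 + Rabs x) * Cnorm (V x))) ->
  (exists B, forall x, Rabs (G x) <= B) ->
  ev d (fun x => Cnorm (f x) <= 2) -> cau d (Zf ka f df).
Proof. intros Hs Hk Hd HG HB [A0 HA0] eps He.
  destruct (G_cau d G _ Hd HG ltac:(intros; pose proof (Rabs_pos x); pose proof (Cnorm_ge0 (V x)); nra) HB (eps/4) ltac:(lra))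
    as [A1 HA1].
  exists (Rmax A0 A1). intros x y Hx Hy.
  pose proof (Rmax_l A0 A1); pose proof (Rmax_r A0 A1).
  assert (key : forall a b, a <= b -> Rmax A0 A1 < d * a -> Rmax A0 A1 < d * b ->
     Cnorm (Cadd (Zf ka f df b) (Copp (Zf ka f df a))) < eps).
  { intros a b Hab Ha Hb.
    assert (Hc : forall c, a <= c <= b -> Cnorm (Cmul (Cexpi (ka * c)) (Cmul (V c) (f c))) <= 2 * ((1 + Rabs c) * Cnorm (V c))).
    { intros c Hc. assert (A0 < d * c) by (pose proof (ev_between d _ a b c Hd Ha Hb Hc); lra).
      rewrite !Cnorm_mul, Cnorm_expi. specialize (HA0 c H1). pose proof (Rabs_pos c).
      pose proof (Cnorm_ge0 (V c)). pose proof (Cnorm_ge0 (f c)). nra. }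
    pose proof (incr_bound (fun t => Cre (Zf ka f df t)) (fun t => Cre (Cmul (Cexpi (ka * t)) (Cmul (V t) (f t))))
       G _ 2 a b ltac:(intros; apply (Zf_deriv V k ka f df Hs Hk)) HG Hab
       ltac:(intros c Hc'; eapply Rle_trans; [apply Cnorm_re | apply Hc; auto])) as B1.
    pose proof (incr_bound (fun t => Cim (Zf ka f df t)) (fun t => Cim (Cmul (Cexpi (ka * t)) (Cmul (V t) (f t))))
       G _ 2 a b ltac:(intros; apply (Zf_deriv V k ka f df Hs Hk)) HG Hab
       ltac:(intros c Hc'; eapply Rle_trans; [apply Cnorm_im | apply Hc; auto])) as B2.
    specialize (HA1 a b ltac:(lra) ltac:(lra)).
    eapply Rle_lt_trans. apply Cnorm_le. cbv beta in B1, B2.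
    assert (E1 : Cre (Cadd (Zf ka f df b) (Copp (Zf ka f df a))) = Cre (Zf ka f df b) - Cre (Zf ka f df a))
      by (unfold Cre, Cadd, Copp; simpl; ring).
    assert (E2 : Cim (Cadd (Zf ka f df b) (Copp (Zf ka f df a))) = Cim (Zf ka f df b) - Cim (Zf ka f df a))
      by (unfold Cim, Cadd, Copp; simpl; ring).
    rewrite E1, E2.
    pose proof (Rle_abs (G a - G b)). pose proof (Rle_abs (- (G a - G b))). rewrite Rabs_Ropp in *.
    lra. }
  destruct (Rle_dec x y).
  - rewrite <- Cnorm_opp. replace (Copp (Cadd (Zf ka f df x) (Copp (Zf ka f df y)))) with
      (Cadd (Zf ka f df y) (Copp (Zf ka f df x))) by ceq. apply key; auto.
  - apply key; auto; lra.
Qed.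


Lemma ident_r ka x (f df : R -> Cplx) :
  Cadd (Zf ka f df x) (Copp (Cmul (Cexpi (2 * ka * x)) (Cadd (Zf (- ka) f df x) (Copp (0, 2 * ka))))) =
  Cmul (0, - 2 * ka) (Cmul (Cexpi (ka * x)) (Cadd (f x) (Copp (Cexpi (ka * x))))).
Proof. unfold Zf. replace (2 * ka * x) with (ka * x + ka * x) by ring.
  replace (- ka * x) with (- (ka * x)) by ring. rewrite Cexpi_add, Cexpi_neg.
  pose proof (sin2_cos2 (ka * x)). unfold Rsqr in H.
  destruct (f x) as [f1 f2]. destruct (df x) as [g1 g2].
  unfold Cexpi, Cadd, Cmul, Copp, Cconj, Cre, Cim. simpl.
  apply injective_projections; simpl; nsatz. Qed.

Lemma ident_d ka x (f df : R -> Cplx) :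
  Cadd (df x) (Copp (Cmul (0, ka) (Cexpi (ka * x)))) =
  Cadd (Cmul (Cconj (Cexpi (ka * x))) (Zf ka f df x)) (Cmul (0, ka) (Cadd (f x) (Copp (Cexpi (ka * x))))).
Proof. unfold Zf.
  pose proof (sin2_cos2 (ka * x)). unfold Rsqr in H.
  destruct (f x) as [f1 f2]. destruct (df x) as [g1 g2].
  unfold Cexpi, Cadd, Cmul, Copp, Cconj, Cre, Cim. simpl.
  apply injective_projections; simpl; nsatz. Qed.

Lemma Cnorm_2 z : Cnorm (Cmul (RtoC 2) z) = 2 * Cnorm z.
Proof. rewrite Cnorm_mul, Cnorm_real, Rabs_right; lra. Qed.

Lemma jost_asym V k s f df d : sol V k f df -> s * s = 1 -> k <> 0 -> d * d = 1 -> short_range V ->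
  tz d (fun x => Cadd (f x) (Copp (Cexpi (s * k * x)))) ->
  tz d (fun x => Cadd (df x) (Copp (Cmul (0, s * k) (Cexpi (s * k * x))))).
Proof. intros Hs Hss Hk Hd [G [HG HB]] Hg. set (ka := s * k) in *.
  assert (Hka : ka * ka = k ^ 2) by (unfold ka; nra).
  assert (Hka' : - ka * - ka = k ^ 2) by (unfold ka; nra).
  assert (Hka0 : 0 < Rabs ka) by (apply Rabs_pos_lt; unfold ka; intro; apply Rmult_integral in H; destruct H; subst; nra).
  assert (Hk0 : ka <> 0) by (intro E; rewrite E in Hka0; rewrite Rabs_R0 in Hka0; lra).
  assert (HfB : ev d (fun x => Cnorm (f x) <= 2)).
  { eapply ev_mono. apply (Hg 1 Rlt_0_1). simpl. intros x Hx.
    pose proof (Cnorm_sub_le (f x) (Cexpi (ka * x))). rewrite Cnorm_expi in H. lra. }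
  pose proof (Zf_cau V k ka f df d G Hs Hka Hd HG HB HfB) as HZ.
  pose proof (Zf_cau V k (- ka) f df d G Hs Hka' Hd HG HB HfB) as HY.
  assert (Hr : tz d (fun x => Cadd (Zf ka f df x) (Copp (Cmul (Cexpi (2 * ka * x)) (Cadd (Zf (- ka) f df x) (Copp (0, 2 * ka))))))).
  { eapply tz_extg. intro x. symmetry. apply ident_r. apply tz_mulc. apply tz_mulb. apply bnd_expi. apply Hg. }
  apply (tz_intro _ _ (2 + Rabs ka)). lra. intros eps He.
  destruct (HZ eps He) as [A1 HA1]. destruct (HY eps He) as [A2 HA2].
  destruct (Hr eps He) as [A3 HA3]. destruct (Hg eps He) as [A4 HA4].
  exists (Rmax (Rmax A1 A2) (Rmax A3 A4)). intros x Hx.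
  pose proof (Rmax_l (Rmax A1 A2) (Rmax A3 A4)). pose proof (Rmax_r (Rmax A1 A2) (Rmax A3 A4)).
  pose proof (Rmax_l A1 A2). pose proof (Rmax_r A1 A2). pose proof (Rmax_l A3 A4). pose proof (Rmax_r A3 A4).
  set (x' := x + d * (PI / (2 * Rabs ka))).
  assert (Hx' : d * x < d * x').
  { unfold x'. replace (d * (x + d * (PI / (2 * Rabs ka)))) with (d * x + (d*d) * (PI / (2 * Rabs ka))) by ring.
    rewrite Hd. pose proof PI_RGT_0. assert (0 < PI / (2 * Rabs ka)) by (apply Rdiv_lt_0_compat; lra). lra. }
  assert (HC : Cexpi (2 * ka * x') = Copp (Cexpi (2 * ka * x))).
  { rewrite <- (Cexpi_pi (2 * ka * x) (d * ka / Rabs ka)). f_equal. unfold x'. field. intro; lra.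
    destruct (d_cases d Hd); subst; unfold Rabs; destruct (Rcase_abs ka).
    - right. field. auto.
    - left. field. auto.
    - left. field. auto.
    - right. field. auto. }
  set (Z := Zf ka f df). set (Y := Zf (- ka) f df). set (C2 := Cexpi (2 * ka * x)).
  assert (E2 : Cmul (RtoC 2) (Z x) =
    Cadd (Cadd (Cadd (Z x) (Copp (Cmul C2 (Cadd (Y x) (Copp (0, 2 * ka))))))
               (Cadd (Z x') (Copp (Cmul (Cexpi (2 * ka * x')) (Cadd (Y x') (Copp (0, 2 * ka)))))))
         (Cadd (Cadd (Z x) (Copp (Z x'))) (Copp (Cmul C2 (Cadd (Y x') (Copp (Y x))))))).
  { rewrite HC. ceq. }
  assert (N1 : Cnorm (Cadd (Z x) (Copp (Cmul C2 (Cadd (Y x) (Copp (0, 2 * ka)))))) < eps) by (apply HA3; lra).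
  assert (N2 : Cnorm (Cadd (Z x') (Copp (Cmul (Cexpi (2 * ka * x')) (Cadd (Y x') (Copp (0, 2 * ka)))))) < eps) by (apply HA3; lra).
  assert (N3 : Cnorm (Cadd (Z x) (Copp (Z x'))) < eps) by (apply HA1; lra).
  assert (N4 : Cnorm (Cmul C2 (Cadd (Y x') (Copp (Y x)))) < eps) by (unfold C2; rewrite Cnorm_mul, Cnorm_expi, Rmult_1_l; apply HA2; lra).
  assert (NZ : 2 * Cnorm (Z x) <= 4 * eps).
  { rewrite <- Cnorm_2, E2. eapply Rle_trans. apply Cnorm_tri. eapply Rle_trans. apply Rplus_le_compat.
    apply Cnorm_tri. apply Cnorm_tri. rewrite Cnorm_opp. lra. }
  assert (Ng : Cnorm (Cadd (f x) (Copp (Cexpi (ka * x)))) < eps) by (apply HA4; lra).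
  rewrite (ident_d ka x f df). eapply Rle_trans. apply Cnorm_tri. rewrite !Cnorm_mul, Cnorm_conj, Cnorm_expi.
  replace (Cnorm (0, ka)) with (Rabs ka) by (rewrite <- Cnorm_real; unfold Cnorm, RtoC, Cre, Cim; simpl; f_equal; ring).
  fold Z. pose proof (Cnorm_ge0 (Cadd (f x) (Copp (Cexpi (ka * x))))). nra.
Qed.


Definition asym d k s (al : Cplx) (F dF : R -> Cplx) :=
  tz d (fun x => Cadd (F x) (Copp (Cmul al (Cexpi (s * k * x))))) /\
  tz d (fun x => Cadd (dF x) (Copp (Cmul (Cmul al (0, s * k)) (Cexpi (s * k * x))))).

Lemma jost_to_asym V k s f df d : sol V k f df -> s * s = 1 -> k <> 0 -> d * d = 1 -> short_range V ->
  tz d (fun x => Cadd (f x) (Copp (Cexpi (s * k * x)))) -> asym d k s (1, 0) f df.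
Proof. intros. pose proof (jost_asym V k s f df d H H0 H1 H2 H3 H4). split.
  eapply tz_extg. 2: apply H4. intro; simpl; ceq.
  eapply tz_extg. 2: apply H5. intro; simpl; ceq. Qed.

Definition Tf (w : R -> R) (f df : R -> Cplx) x := Cconj (Cadd (df x) (Cmul (0, w x) (f x))).
Definition TdF (w : R -> R) k0 k (f df : R -> Cplx) x :=
  Cconj (Cadd (Cmul (0, w x) (Cadd (df x) (Cmul (0, w x) (f x)))) (Cmul (RtoC (k0^2 - k^2)) (f x))).

Lemma T_sol w dw k0 k f df : (forall x, derivable_pt_lim w x (dw x)) ->
  sol (potV w dw k0) k f df -> sol (potV w dw k0) k (Tf w f df) (TdF w k0 k f df).
Proof. intros Hw Hs x. pose proof (Hs x) as [H1 H2]. split.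
  - eapply Cd_eq. apply Cd_conj. apply Cd_add. apply H2. apply Cd_mul. apply Cd_imag. apply Hw. apply H1.
    unfold TdF, potV. ceq.
  - eapply Cd_eq. apply Cd_conj. apply Cd_add. apply Cd_mul. apply Cd_imag. apply Hw.
    apply Cd_add. apply H2. apply Cd_mul. apply Cd_imag. apply Hw. apply H1.
    apply Cd_mul. apply Cd_const. apply H1.
    unfold Tf, potV. ceq. Qed.

Lemma expi_negs s k x : Cexpi (- s * k * x) = Cconj (Cexpi (s * k * x)).
Proof. rewrite <- Cexpi_neg. f_equal. ring. Qed.

Lemma T_asym d k s al f df w k0 om : asym d k s al f df -> tr d w om -> (s = 1 \/ s = -1) -> (om = k0 \/ om = -k0) ->
  asym d k (- s) (Cmul (0, - (s * k + om)) (Cconj al)) (Tf w f df) (TdF w k0 k f df).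
Proof. intros [H0 H1] Hw Hs Hom.
  pose proof (bnd_real d w om Hw) as Bw.
  assert (Bw' : bnd d (fun x => (0, w x))).
  { destruct Bw as [B HB]. exists B. eapply ev_mono. apply HB. simpl. intros x Hx.
    replace (Cnorm (0, w x)) with (Cnorm (RtoC (w x))). auto. unfold Cnorm, RtoC, Cre, Cim; simpl. f_equal; ring. }
  pose proof (tz_real d w om Hw) as Tw.
  assert (Ha1 : tz d (fun x => Cadd (Cadd (Cadd (df x) (Copp (Cmul (Cmul al (0, s * k)) (Cexpi (s * k * x)))))
      (Cmul (0, w x) (Cadd (f x) (Copp (Cmul al (Cexpi (s * k * x)))))))
      (Cmul (Cmul (0,1) (Cmul al (Cexpi (s * k * x)))) (RtoC (w x - om))))).
  { apply tz_add. apply tz_add. apply H1. apply tz_mulb. apply Bw'. apply H0.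
    apply tz_mulb. apply bnd_mul. apply bnd_const. apply bnd_mul. apply bnd_const. apply bnd_expi. apply Tw. }
  split.
  - eapply tz_extg. 2: apply (tz_conj _ _ Ha1). intro x. simpl. rewrite expi_negs. unfold Tf. ceq.
  - assert (Ha2 : tz d (fun x => Cconj (Cadd (Cadd (Cmul (0, w x)
       (Cadd (Cadd (Cadd (df x) (Copp (Cmul (Cmul al (0, s * k)) (Cexpi (s * k * x)))))
        (Cmul (0, w x) (Cadd (f x) (Copp (Cmul al (Cexpi (s * k * x)))))))
        (Cmul (Cmul (0,1) (Cmul al (Cexpi (s * k * x)))) (RtoC (w x - om)))))
       (Cmul (RtoC (k0^2 - k^2)) (Cadd (f x) (Copp (Cmul al (Cexpi (s * k * x)))))))
       (Cmul (Cmul (RtoC (- (s * k + om))) (Cmul al (Cexpi (s * k * x)))) (RtoC (w x - om)))))).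
    { apply tz_conj. apply tz_add. apply tz_add. apply tz_mulb. apply Bw'. apply Ha1.
      apply tz_mulc. apply H0.
      apply tz_mulb. apply bnd_mul. apply bnd_const.
      apply bnd_mul. apply bnd_const. apply bnd_expi. apply Tw. }
    eapply tz_extg. 2: apply Ha2.
    intro x. simpl. rewrite expi_negs. unfold TdF.
    destruct Hs as [-> | ->]; destruct Hom as [-> | ->]; ceq.
Qed.


Definition Wr (f df g dg : R -> Cplx) x := Cadd (Cmul (f x) (dg x)) (Copp (Cmul (df x) (g x))).

Lemma W_const V k f df g dg : sol V k f df -> sol V k g dg -> forall x y, Wr f df g dg x = Wr f df g dg y.
Proof. intros Hf Hg. apply Cconst_of_d0. intro x. destruct (Hf x) as [F1 F2]. destruct (Hg x) as [G1 G2].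
  eapply Cd_eq. apply Cd_add. apply Cd_mul. apply F1. apply G2. apply Cd_opp. apply Cd_mul. apply F2. apply G1.
  ceq. Qed.

Lemma bnd_asym0 d k s al F dF : asym d k s al F dF -> bnd d F.
Proof. intros [H _]. eapply bnd_near. apply H. apply bnd_mul. apply bnd_const. apply bnd_expi. Qed.
Lemma bnd_asym1 d k s al F dF : asym d k s al F dF -> bnd d dF.
Proof. intros [_ H]. eapply bnd_near. apply H. apply bnd_mul. apply bnd_const. apply bnd_expi. Qed.

Lemma W_asym d k s s' al be f df g dg : asym d k s al f df -> asym d k s' be g dg -> d * d = 1 ->
  (forall x y, Wr f df g dg x = Wr f df g dg y) -> (s' = s \/ s' = - s) ->
  forall x, Wr f df g dg x = Cmul (Cmul al be) (0, k * (s' - s)).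
Proof. intros Hf Hg Hd Hc Hs x. pose proof Hf as [F0 F1]. pose proof Hg as [G0 G1].
  set (c := Cmul (Cmul al be) (0, k * (s' - s))).
  assert (T : tz d (fun y => Cadd (Wr f df g dg y) (Copp c))).
  { set (E := fun y => Cexpi (s * k * y)). set (E' := fun y => Cexpi (s' * k * y)).
    assert (T0 : tz d (fun y => Cadd (Cadd (Cadd (Cadd
       (Cmul (dg y) (Cadd (f y) (Copp (Cmul al (E y)))))
       (Cmul (Cmul al (E y)) (Cadd (dg y) (Copp (Cmul (Cmul be (0, s' * k)) (E' y))))))
       (Copp (Cmul (g y) (Cadd (df y) (Copp (Cmul (Cmul al (0, s * k)) (E y)))))))
       (Copp (Cmul (Cmul (Cmul al (0, s * k)) (E y)) (Cadd (g y) (Copp (Cmul be (E' y)))))))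
       C0)).
    { apply tz_add. apply tz_add. apply tz_add. apply tz_add.
      apply tz_mulb. apply (bnd_asym1 _ _ _ _ _ _ Hg). apply F0.
      apply tz_mulb. apply bnd_mul. apply bnd_const. apply bnd_expi. apply G1.
      apply tz_opp. apply tz_mulb. apply (bnd_asym0 _ _ _ _ _ _ Hg). apply F1.
      apply tz_opp. apply tz_mulb. apply bnd_mul. apply bnd_const. apply bnd_expi. apply G0.
      apply tz_zero. }
    eapply tz_extg. 2: apply T0. unfold E, E'.
    intro y. simpl. unfold Wr.
    destruct Hs as [-> | ->].
    - unfold c. ceq.
    - rewrite expi_negs. pose proof (Cexpi_conj_mul (s * k * y)) as EE. revert EE.
      unfold c. generalize (Cexpi (s * k * y)). intros [e1 e2] EE. cunf.
      injection EE; intros E2 E1. apply injective_projections; simpl; nsatz. }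
  assert (tz d (fun _ => Cadd (Wr f df g dg x) (Copp c))).
  { eapply tz_extg. 2: apply T. intro y. simpl. rewrite (Hc y x). auto. }
  apply tz_const in H; auto. replace (Wr f df g dg x) with (Cadd (Cadd (Wr f df g dg x) (Copp c)) c) by ceq.
  rewrite H. ceq. Qed.

Lemma three_term (f df g dg h dh : R -> Cplx) x :
  Cadd (Cadd (Cmul (Wr f df g dg x) (h x)) (Cmul (Wr g dg h dh x) (f x))) (Cmul (Wr h dh f df x) (g x)) = C0 /\
  Cadd (Cadd (Cmul (Wr f df g dg x) (dh x)) (Cmul (Wr g dg h dh x) (df x))) (Cmul (Wr h dh f df x) (dg x)) = C0.
Proof. unfold Wr. split; ceq. Qed.


Lemma sol_of_solves V k phi : solves_schrodinger V k phi -> exists dphi, sol V k phi dphi.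
Proof. intros [dp [ddp H]]. exists dp. intro x. destruct (H x) as [h1 [h2 h3]]. split; auto.
  eapply Cd_eq. apply h2. revert h3. generalize (ddp x) (V x) (phi x). intros [a b] [c e] [g h] E.
  cunf. injection E; intros E1 E2. apply injective_projections; simpl; lra. Qed.

Lemma get_asym V k s d phi : short_range V -> k <> 0 -> d * d = 1 -> s * s = 1 ->
  solves_schrodinger V k phi -> tz d (fun x => Cadd (phi x) (Copp (Cexpi (s * k * x)))) ->
  exists dphi, sol V k phi dphi /\ asym d k s (1, 0) phi dphi.
Proof. intros Hs Hk Hd Hss Hsol Ht. destruct (sol_of_solves _ _ _ Hsol) as [dp Hdp].
  exists dp. split; auto. apply (jost_to_asym V k s phi dp d); auto. Qed.

Lemma solve_h k a b c h f g : a = (0, - 2 * k) ->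
  Cadd (Cadd (Cmul a h) (Cmul b f)) (Cmul c g) = C0 ->
  Cmul (RtoC (2 * k)) h = Cmul (0, -1) (Cadd (Cmul b f) (Cmul c g)).
Proof. intros -> E. revert E. destruct h, b, f, c, g. cunf. intro E. injection E. intros E1 E2.
  apply injective_projections; simpl; lra. Qed.

Lemma indep k X Y a b da db : k <> 0 -> Cadd (Cmul a db) (Copp (Cmul da b)) = (0, - 2 * k) ->
  Cadd (Cmul X a) (Cmul Y b) = C0 -> Cadd (Cmul X da) (Cmul Y db) = C0 -> Y = C0.
Proof. intros Hk HW E1 E2.
  assert (Cmul Y (0, - 2 * k) = C0).
  { rewrite <- HW. transitivity (Cadd (Cmul a (Cadd (Cmul X da) (Cmul Y db))) (Copp (Cmul da (Cadd (Cmul X a) (Cmul Y b))))).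
    ceq. rewrite E1, E2. ceq. }
  destruct Y as [y1 y2]. cunf. injection H. intros H1 H2.
  assert (y1 = 0) by nra. assert (y2 = 0) by nra. subst; auto. Qed.


Lemma key_identity (w dw : R -> R) (k0 : R) (Hk0 : 0 < k0)
  (Hw : forall x, derivable_pt_lim w x (dw x))
  (Hlimm : lim_minus_infty w k0) (Hlimp : lim_plus_infty w (- k0))
  (Hshort : short_range (potV w dw k0))
  (phi1L phi2L phi1R phi2R : R -> R -> Cplx) (M11 M12 M21 M22 : R -> Cplx)
  (HM : forall k, k <> 0 -> transfer_matrix_at (potV w dw k0) k phi1L phi2L phi1R phi2R M11 M12 M21 M22)
  k (Hk : 0 < k) :
  Cmul (RtoC (k + k0)) (M22 k) = Cmul (RtoC (k - k0)) (Cconj (M11 k)).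
Proof.
  assert (Hk' : k <> 0) by lra.
  destruct (HM k Hk') as [[S1L A1L] [[S2L A2L] [[S1R A1R] [[S2R A2R] [D1 D2]]]]].
  set (V := potV w dw k0) in *.
  destruct (get_asym V k 1 (-1) (phi1L k) Hshort Hk' ltac:(lra) ltac:(lra) S1L) as [d1L [s1L a1L]].
  { eapply tz_extg. 2: apply (tz_of_minus _ A1L). intro x. simpl. rewrite Rmult_1_l. auto. }
  destruct (get_asym V k (-1) (-1) (phi2L k) Hshort Hk' ltac:(lra) ltac:(lra) S2L) as [d2L [s2L a2L]].
  { eapply tz_extg. 2: apply (tz_of_minus _ A2L). intro x. simpl. replace (-1 * k * x) with (- k * x) by ring. auto. }
  destruct (get_asym V k 1 1 (phi1R k) Hshort Hk' ltac:(lra) ltac:(lra) S1R) as [d1R [s1R a1R]].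
  { eapply tz_extg. 2: apply (tz_of_plus _ A1R). intro x. simpl. rewrite Rmult_1_l. auto. }
  destruct (get_asym V k (-1) 1 (phi2R k) Hshort Hk' ltac:(lra) ltac:(lra) S2R) as [d2R [s2R a2R]].
  { eapply tz_extg. 2: apply (tz_of_plus _ A2R). intro x. simpl. replace (-1 * k * x) with (- k * x) by ring. auto. }
  set (f1L := phi1L k) in *. set (f2L := phi2L k) in *. set (f1R := phi1R k) in *. set (f2R := phi2R k) in *.
  pose proof (tr_of_plus _ _ Hlimp) as Tp. pose proof (tr_of_minus _ _ Hlimm) as Tm.
  pose proof (T_sol w dw k0 k f1R d1R Hw s1R) as sT1R.
  pose proof (T_sol w dw k0 k f2R d2R Hw s2R) as sT2R.
  pose proof (T_sol w dw k0 k f1L d1L Hw s1L) as sT1L.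
  pose proof (T_asym 1 k 1 (1,0) f1R d1R w k0 (-k0) a1R Tp (or_introl eq_refl) (or_intror eq_refl)) as aT1R.
  pose proof (T_asym 1 k (-1) (1,0) f2R d2R w k0 (-k0) a2R Tp (or_intror eq_refl) (or_intror eq_refl)) as aT2R.
  pose proof (T_asym (-1) k 1 (1,0) f1L d1L w k0 k0 a1L Tm (or_introl eq_refl) (or_introl eq_refl)) as aT1L.
  set (T1R := Tf w f1R d1R) in *. set (dT1R := TdF w k0 k f1R d1R) in *.
  set (T2R := Tf w f2R d2R) in *. set (dT2R := TdF w k0 k f2R d2R) in *.
  set (T1L := Tf w f1L d1L) in *. set (dT1L := TdF w k0 k f1L d1L) in *.
  assert (H11 : 1 * 1 = 1) by ring. assert (Hm11 : -1 * -1 = 1) by ring.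
  pose proof (W_asym 1 k 1 (-1) _ _ _ _ _ _ a1R a2R H11 (W_const _ _ _ _ _ _ s1R s2R) ltac:(right; ring) 0) as W12R.
  pose proof (W_asym (-1) k 1 (-1) _ _ _ _ _ _ a1L a2L Hm11 (W_const _ _ _ _ _ _ s1L s2L) ltac:(right; ring) 0) as W12L.
  pose proof (W_asym 1 k _ _ _ _ _ _ _ _ a2R aT1R H11 (W_const _ _ _ _ _ _ s2R sT1R) ltac:(left; ring) 0) as Wb1.
  pose proof (W_asym 1 k _ _ _ _ _ _ _ _ aT1R a1R H11 (W_const _ _ _ _ _ _ sT1R s1R) ltac:(right; ring) 0) as Wc1.
  pose proof (W_asym 1 k _ _ _ _ _ _ _ _ a2R aT2R H11 (W_const _ _ _ _ _ _ s2R sT2R) ltac:(right; ring) 0) as Wb2.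
  pose proof (W_asym 1 k _ _ _ _ _ _ _ _ aT2R a1R H11 (W_const _ _ _ _ _ _ sT2R s1R) ltac:(left; ring) 0) as Wc2.
  pose proof (W_asym (-1) k _ _ _ _ _ _ _ _ a2L aT1L Hm11 (W_const _ _ _ _ _ _ s2L sT1L) ltac:(left; ring) 0) as Wb3.
  pose proof (W_asym (-1) k _ _ _ _ _ _ _ _ aT1L a1L Hm11 (W_const _ _ _ _ _ _ sT1L s1L) ltac:(right; ring) 0) as Wc3.
  pose proof (three_term f1R d1R f2R d2R T1R dT1R 0) as [E1 E1'].
  pose proof (three_term f1R d1R f2R d2R T2R dT2R 0) as [E2 E2'].
  pose proof (three_term f1L d1L f2L d2L T1L dT1L 0) as [E3 E3'].
  rewrite W12R in E1, E1'. rewrite W12R in E2, E2'. rewrite W12L in E3, E3'.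
  apply (solve_h k) in E1; [|ceq]. apply (solve_h k) in E1'; [|ceq].
  apply (solve_h k) in E2; [|ceq]. apply (solve_h k) in E2'; [|ceq].
  apply (solve_h k) in E3; [|ceq]. apply (solve_h k) in E3'; [|ceq].
  assert (Dd1 : d1L 0 = Cadd (Cmul (M11 k) (d1R 0)) (Cmul (M21 k) (d2R 0))).
  { apply (Cd_unique f1L 0). apply (proj1 (s1L 0)). eapply Cd_ext. intro t. symmetry. apply D1.
    eapply Cd_eq. apply Cd_add; apply Cd_mul; [apply Cd_const | apply (proj1 (s1R 0)) | apply Cd_const | apply (proj1 (s2R 0))].
    ceq. }
  assert (Dd2 : d2L 0 = Cadd (Cmul (M12 k) (d1R 0)) (Cmul (M22 k) (d2R 0))).
  { apply (Cd_unique f2L 0). apply (proj1 (s2L 0)). eapply Cd_ext. intro t. symmetry. apply D2.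
    eapply Cd_eq. apply Cd_add; apply Cd_mul; [apply Cd_const | apply (proj1 (s1R 0)) | apply Cd_const | apply (proj1 (s2R 0))].
    ceq. }
  assert (HT : T1L 0 = Cadd (Cmul (Cconj (M11 k)) (T1R 0)) (Cmul (Cconj (M21 k)) (T2R 0))).
  { unfold T1L, T1R, T2R, Tf. rewrite Dd1, (D1 0). ceq. }
  assert (HdT : dT1L 0 = Cadd (Cmul (Cconj (M11 k)) (dT1R 0)) (Cmul (Cconj (M21 k)) (dT2R 0))).
  { unfold dT1L, dT1R, dT2R, TdF. rewrite Dd1, (D1 0). ceq. }
  set (X := Cmul (0,-1) (Cadd (Cadd (Cmul (Wr f2L d2L T1L dT1L 0) (M11 k)) (Cmul (Wr T1L dT1L f1L d1L 0) (M12 k)))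
     (Copp (Cadd (Cmul (Cconj (M11 k)) (Wr f2R d2R T1R dT1R 0)) (Cmul (Cconj (M21 k)) (Wr f2R d2R T2R dT2R 0)))))).
  set (Y := Cmul (0,-1) (Cadd (Cadd (Cmul (Wr f2L d2L T1L dT1L 0) (M21 k)) (Cmul (Wr T1L dT1L f1L d1L 0) (M22 k)))
     (Copp (Cadd (Cmul (Cconj (M11 k)) (Wr T1R dT1R f1R d1R 0)) (Cmul (Cconj (M21 k)) (Wr T2R dT2R f1R d1R 0)))))).
  assert (HX : Cadd (Cmul X (f1R 0)) (Cmul Y (f2R 0)) = C0).
  { transitivity (Cadd (Cmul (0, -1) (Cadd (Cmul (Wr f2L d2L T1L dT1L 0) (f1L 0)) (Cmul (Wr T1L dT1L f1L d1L 0) (f2L 0))))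
      (Copp (Cadd (Cmul (Cconj (M11 k)) (Cmul (0, -1) (Cadd (Cmul (Wr f2R d2R T1R dT1R 0) (f1R 0)) (Cmul (Wr T1R dT1R f1R d1R 0) (f2R 0)))))
                  (Cmul (Cconj (M21 k)) (Cmul (0, -1) (Cadd (Cmul (Wr f2R d2R T2R dT2R 0) (f1R 0)) (Cmul (Wr T2R dT2R f1R d1R 0) (f2R 0)))))))).
    { rewrite (D1 0), (D2 0). unfold X, Y. ceq. }
    rewrite <- E3, <- E1, <- E2, HT. ceq. }
  assert (HX' : Cadd (Cmul X (d1R 0)) (Cmul Y (d2R 0)) = C0).
  { transitivity (Cadd (Cmul (0, -1) (Cadd (Cmul (Wr f2L d2L T1L dT1L 0) (d1L 0)) (Cmul (Wr T1L dT1L f1L d1L 0) (d2L 0))))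
      (Copp (Cadd (Cmul (Cconj (M11 k)) (Cmul (0, -1) (Cadd (Cmul (Wr f2R d2R T1R dT1R 0) (d1R 0)) (Cmul (Wr T1R dT1R f1R d1R 0) (d2R 0)))))
                  (Cmul (Cconj (M21 k)) (Cmul (0, -1) (Cadd (Cmul (Wr f2R d2R T2R dT2R 0) (d1R 0)) (Cmul (Wr T2R dT2R f1R d1R 0) (d2R 0)))))))).
    { rewrite Dd1, Dd2. unfold X, Y. ceq. }
    rewrite <- E3', <- E1', <- E2', HdT. ceq. }
  assert (W0 : Cadd (Cmul (f1R 0) (d2R 0)) (Copp (Cmul (d1R 0) (f2R 0))) = (0, - 2 * k)).
  { unfold Wr in W12R. rewrite W12R. ceq. }
  pose proof (indep k X Y _ _ _ _ Hk' W0 HX HX') as HY.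
  unfold Y in HY. rewrite Wb3, Wc3, Wc1, Wc2 in HY. revert HY.
  generalize (M22 k) (M11 k) (M21 k). intros [a b] [c e] [g h] HY. cunf. injection HY. intros HY1 HY2.
  apply injective_projections; simpl; nra.
Qed.


Lemma dpl_loc_ext f g x l r : 0 < r -> (forall y, Rabs (y - x) < r -> f y = g y) ->
  derivable_pt_lim f x l -> derivable_pt_lim g x l.
Proof. intros Hr He H eps Heps. destruct (H eps Heps) as [del Hd].
  assert (0 < Rmin del r) by (apply Rmin_pos; [apply cond_pos|lra]).
  exists (mkposreal _ H0). intros h Hh Hh'. simpl in Hh'.
  pose proof (Rmin_l del r). pose proof (Rmin_r del r).
  rewrite <- !He. apply Hd; auto; lra.
  replace (x - x) with 0 by ring. rewrite Rabs_R0; lra.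
  replace (x + h - x) with h by ring. lra. Qed.

Lemma deriv_ratio (F : R -> R) k0 dF : 0 < k0 -> derivable_pt_lim F k0 dF ->
  derivable_pt_lim (fun t => (t - k0) / (t + k0) * F t) k0 (F k0 / (2 * k0)).
Proof. intros Hk HF. eapply dpl_eq. apply (dpl_mult (fun t => (t - k0) / (t + k0)) F).
  apply (derivable_pt_lim_div (fun t => t - k0) (fun t => t + k0)).
  apply (dpl_minus (fun t => t) (fun _ => k0)). apply derivable_pt_lim_id. apply dpl_const.
  apply (dpl_plus (fun t => t) (fun _ => k0)). apply derivable_pt_lim_id. apply dpl_const.
  lra. apply HF. cbv beta. unfold Rsqr. field. lra. Qed.

Theorem mainTheorem6
  (w dw : R -> R) (k0 : R)
  (Hk0 : 0 < k0)
  (Hw : forall x, derivable_pt_lim w x (dw x))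
  (Hdw : continuity dw)
  (Hlimm : lim_minus_infty w k0)
  (Hlimp : lim_plus_infty w (- k0))
  (Hshort : short_range (potV w dw k0))
  (phi1L phi2L phi1R phi2R : R -> R -> Cplx)
  (M11 M12 M21 M22 : R -> Cplx)
  (HM : forall k, k <> 0 ->
     transfer_matrix_at (potV w dw k0) k phi1L phi2L phi1R phi2R M11 M12 M21 M22)
  (HM11 : exists d11 : Cplx, Cderiv_lim M11 k0 d11)
  (d22 : Cplx) (HM22 : Cderiv_lim M22 k0 d22) :
  M11 k0 = Cmul (RtoC (2 * k0)) (Cconj d22) /\
  (M11 k0 = C0 <-> d22 = C0) /\
  (M11 k0 = C0 <-> (M22 k0 = C0 /\ d22 = C0)).
Proof.
  pose proof (key_identity w dw k0 Hk0 Hw Hlimm Hlimp Hshort phi1L phi2L phi1R phi2R M11 M12 M21 M22 HM) as KI.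
  assert (Hre : forall t, 0 < t -> Cre (M22 t) = (t - k0) / (t + k0) * Cre (M11 t)).
  { intros t Ht. specialize (KI t Ht). revert KI. generalize (M22 t) (M11 t). intros [a b] [c e] E.
    cunf. injection E. intros E1 E2. field_simplify_eq. lra. lra. }
  assert (Him : forall t, 0 < t -> Cim (M22 t) = (t - k0) / (t + k0) * (- Cim (M11 t))).
  { intros t Ht. specialize (KI t Ht). revert KI. generalize (M22 t) (M11 t). intros [a b] [c e] E.
    cunf. injection E. intros E1 E2. field_simplify_eq. lra. lra. }
  destruct HM11 as [d11 [H11r H11i]]. destruct HM22 as [H22r H22i].
  assert (Er : Cre d22 = Cre (M11 k0) / (2 * k0)).
  { apply (uniqueness_limite (fun t => Cre (M22 t)) k0). auto.
    apply (dpl_loc_ext (fun t => (t - k0) / (t + k0) * Cre (M11 t)) _ _ _ k0 Hk0).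
    intros y Hy. symmetry. apply Hre. apply Rabs_def2 in Hy. lra.
    eapply (deriv_ratio (fun t => Cre (M11 t))); eauto. }
  assert (Ei : Cim d22 = - Cim (M11 k0) / (2 * k0)).
  { apply (uniqueness_limite (fun t => Cim (M22 t)) k0). auto.
    apply (dpl_loc_ext (fun t => (t - k0) / (t + k0) * (- Cim (M11 t))) _ _ _ k0 Hk0).
    intros y Hy. symmetry. apply Him. apply Rabs_def2 in Hy. lra.
    eapply (deriv_ratio (fun t => - Cim (M11 t))); auto. apply dpl_opp; eauto. }
  assert (Z22 : M22 k0 = C0).
  { pose proof (Hre k0 Hk0). pose proof (Him k0 Hk0). revert H H0. generalize (M22 k0). intros [a b].
    cunf. intros -> ->. f_equal; field; lra. }
  rewrite Z22. revert Er Ei. generalize (M11 k0) d22. intros [a b] [p q]. unfold Cre, Cim; simpl. intros -> ->.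
  cunf. assert (E : (a, b) = (2 * k0 * (a / (2 * k0)) - 0 * - (- b / (2 * k0)), 2 * k0 * - (- b / (2 * k0)) + 0 * (a / (2 * k0)))).
  { f_equal; field; lra. }
  split; [exact E|]. split; split.
  - intro H. injection H; intros -> ->. f_equal; field; lra.
  - intro H. injection H; intros H1 H2. f_equal.
    apply (Rmult_eq_reg_r (/ (2 * k0))). lra. apply Rinv_neq_0_compat; lra.
    apply (Rmult_eq_reg_r (/ (2 * k0))). lra. apply Rinv_neq_0_compat; lra.
  - intro H. injection H; intros -> ->. split; auto. f_equal; field; lra.
  - intros [_ H]. injection H; intros H1 H2. f_equal.
    apply (Rmult_eq_reg_r (/ (2 * k0))). lra. apply Rinv_neq_0_compat; lra.
    apply (Rmult_eq_reg_r (/ (2 * k0))). lra. apply Rinv_neq_0_compat; lra.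
Qed.
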